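(* Let $\Lambda=(V,\pi,v,\le)$ be a bi-colored weighted ordered vertex with $r(\Lambda)=2$, and identify $V=\{1,\dots,l\}$ via $\le$. If $\pi(1)=\pi(2)=\circ$, then $s(\Lambda)=0$.
   Context: A bi-colored weighted ordered vertex is $\Lambda=(V,\pi,v,\le)$ with $V$ a finite set, $\pi\colon V\to\{\bullet,\circ\}$, $v\colon V\to\mathbb{Z}_{\ge1}$, $\le$ a total order on $V$. Put $V_\bullet=\pi^{-1}(\bullet)$, $V_\circ=\pi^{-1}(\circ)$, $r(\Lambda)=\sum_{i\in V_\bullet}v(i)$, $n(\Lambda)=\sum_{i\in V_\circ}v(i)$; $v_i=(v(i),0)$ if $i\in V_\bullet$, $v_i=(0,v(i))$ if $i\in V_\circ$. For $(r,n)\in\mathbb{Z}_{\ge0}^2\setminus\{0\}$ let $\mu(r,n)=n/r\in\mathbb{Q}\cup\{\infty\}$ ($\infty$ if $r=0$, larger than every rational). For vectors $w_1,\dots,w_l$ define $s_l(w_1,\dots,w_l)=(-1)^k$ if for each $i=1,\dots,l-1$ either (a) $\mu(w_i)>\mu(w_{i+1})$ and $\mu(w_1+\dots+w_i)\ge\mu(w_{i+1}+\dots+w_l)$, or (b) $\mu(w_i)\le\mu(w_{i+1})$ and $\mu(w_1+\dots+w_i)<\mu(w_{i+1}+\dots+w_l)$, where $k$ is the number of $i$ satisfying (b); otherwise $s_l=0$. Set $s(\Lambda)=s_l(v_1,\dots,v_l)$, $l=|V|$. *)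

(* Defs.v *)
From mathcomp Require Import all_boot all_order all_algebra.
Set Implicit Arguments. Unset Strict Implicit. Unset Printing Implicit Defensive.
Import Order.TTheory GRing.Theory Num.Theory.

Inductive color := Bullet | Circle.

Definition color_eqb (a b : color) : bool :=
  match a, b with Bullet, Bullet | Circle, Circle => true | _, _ => false end.

(* A bi-colored weighted ordered vertex with V identified with {0,...,l-1}
   (i.e. {1,...,l} shifted) via the total order: colors pi, weights v (>= 1). *)

(* vectors in Z_{>=0}^2 as pairs (r, n) of naturals *)
Definition vec := (nat * nat)%type.
Definition vadd (a b : vec) : vec := (a.1 + b.1, a.2 + b.2)%N.
Definition vsum (s : seq vec) : vec := foldr vadd (0, 0)%N s.

(* slope mu(r,n) = n/r in Q ∪ {∞}; None encodes ∞ *)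
Definition mu (w : vec) : option rat :=
  if w.1 == 0%N then None else Some (((w.2)%:R / (w.1)%:R)%R).

Definition mu_lt (a b : option rat) : bool :=
  match a, b with
  | Some x, Some y => (x < y)%R
  | Some _, None => true
  | None, _ => false
  end.
Definition mu_le (a b : option rat) : bool := ~~ mu_lt b a.

(* conditions (a),(b) for index i (0-based: compares w_i and w_{i+1}) *)
Definition cond_a (ws : seq vec) (i : nat) : bool :=
  mu_lt (mu (nth (0,0)%N ws i.+1)) (mu (nth (0,0)%N ws i)) &&
  mu_le (mu (vsum (drop i.+1 ws))) (mu (vsum (take i.+1 ws))).
Definition cond_b (ws : seq vec) (i : nat) : bool :=
  mu_le (mu (nth (0,0)%N ws i)) (mu (nth (0,0)%N ws i.+1)) &&
  mu_lt (mu (vsum (take i.+1 ws))) (mu (vsum (drop i.+1 ws))).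

Definition s_l (ws : seq vec) : int :=
  let idx := iota 0 (size ws).-1 in
  if all (fun i => cond_a ws i || cond_b ws i) idx
  then ((-1) ^+ count (cond_b ws) idx)%R
  else 0%R.

Definition vertex_vec (c : color) (k : nat) : vec :=
  match c with Bullet => (k, 0%N) | Circle => (0%N, k) end.

Definition s_vertex (l : nat) (pi : 'I_l -> color) (v : 'I_l -> nat) : int :=
  s_l [seq vertex_vec (pi i) (v i) | i <- enum 'I_l].

Definition r_vertex (l : nat) (pi : 'I_l -> color) (v : 'I_l -> nat) : nat :=
  (\sum_(i < l | color_eqb (pi i) Bullet) v i)%N.

(* Main.v *)
Require Import Defs.
From mathcomp Require Import all_boot all_order all_algebra.

Theorem lemma4p8 (l : nat) (pi : 'I_l -> color) (v : 'I_l -> nat)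
  (hv : forall i, (0 < v i)%N)
  (hr : r_vertex pi v = 2%N)
  (h12 : forall i : 'I_l, (i < 2)%N -> pi i = Circle)
  (hl : (2 <= l)%N) :
  s_vertex pi v = 0%R.
Proof.
rewrite /s_vertex /s_l.
set ws := [seq _ | i <- _].
have hs : size ws = l by rewrite size_map size_enum_ord.
have h0 : nth (0,0)%N ws 0 = (0%N, v (Ordinal (leq_trans (isT : 0 < 2)%N hl))).
  rewrite (nth_map (Ordinal (leq_trans (isT : 0 < 2)%N hl))) ?size_enum_ord //;
    last exact: leq_trans _ hl.
  have -> : nth (Ordinal (leq_trans (isT : 0 < 2)%N hl)) (enum 'I_l) 0
          = Ordinal (leq_trans (isT : 0 < 2)%N hl).
    by apply: val_inj; rewrite /= nth_enum_ord //; exact: leq_trans _ hl.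
  by rewrite h12.
have h1 : nth (0,0)%N ws 1 = (0%N, v (Ordinal hl)).
  rewrite (nth_map (Ordinal hl)) ?size_enum_ord //.
  have -> : nth (Ordinal hl) (enum 'I_l) 1 = Ordinal hl.
    by apply: val_inj; rewrite /= nth_enum_ord.
  by rewrite h12.
have hs2 : (2 <= size ws)%N by rewrite hs.
move: h0 h1; case E: ws hs2 => [|x [|y rest]] //= _ -> ->.
rewrite /cond_a /cond_b /= /mu /=.
by rewrite /vadd /=.
Qed.
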